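(* Let $T$ be a positive integer, $x \in \{0,1\}^T$, $p \in [0,1]^T$, and let $S \subset [0,1]$ be a finite set. Suppose $\mathcal{D} = (\mathcal{D}_1,\ldots,\mathcal{D}_T) \in \underline{\mathcal{C}}(x)$ where every $\mathcal{D}_t$ is supported on $S$. Then $\mathsf{CalDist}(x,p) \le \|p - \mathcal{D}\|_1 + 4|S|$.
   Context: For $x \in \{0,1\}^T$, let $\mathcal{C}(x) = \{q \in [0,1]^T : \sum_{t=1}^T (x_t - q_t)\mathbf{1}[q_t = \alpha] = 0 \text{ for all } \alpha \in [0,1]\}$ and $\mathsf{CalDist}(x,p) = \min_{q \in \mathcal{C}(x)} \|p-q\|_1$. Let $\underline{\mathcal{C}}(x)$ be the set of $T$-tuples $\mathcal{D} = (\mathcal{D}_1,\ldots,\mathcal{D}_T)$ of probability distributions, each with finite support contained in $[0,1]$, such that $\sum_{t=1}^T (x_t - \alpha)\mathcal{D}_t(\alpha) = 0$ for every $\alpha \in [0,1]$. For such $\mathcal{D}$, $\|p - \mathcal{D}\|_1 = \sum_{t=1}^T \mathbb{E}_{q_t \sim \mathcal{D}_t}|p_t - q_t|$. *)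

(* Defs.v *)
From HB Require Import structures.
From mathcomp Require Import all_boot all_order all_algebra.
From mathcomp Require Import finmap.
From mathcomp Require Import all_classical all_reals.
Set Implicit Arguments. Unset Strict Implicit. Unset Printing Implicit Defensive.
Import Order.TTheory GRing.Theory Num.Theory.
Local Open Scope classical_set_scope.
Local Open Scope ring_scope.

Section Defs.
Variables (R : realType) (T : nat).

Definition calibrated (x q : 'I_T -> R) : Prop :=
  (forall t, 0 <= q t <= 1) /\
  forall a : R, 0 <= a <= 1 ->
    \sum_(t < T) (x t - q t) * (q t == a)%:R = 0.

Definition l1dist (p q : 'I_T -> R) : R := \sum_(t < T) `|p t - q t|.

(* CalDist(x,p) = min_{q in C(x)} ||p - q||_1 (the min is attained, so it
   equals the infimum used here) *)
Definition CalDist (x p : 'I_T -> R) : R :=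
  inf [set l1dist p q | q in [set q | calibrated x q]].

Definition is_fdist01 (d : R -> R) : Prop :=
  [/\ forall a, 0 <= d a,
      finite_set [set a | d a != 0],
      [set a | d a != 0] `<=` [set a | 0 <= a <= 1]
    & \sum_(a \in [set: R]) d a = 1].

Definition lowC (x : 'I_T -> R) (D : 'I_T -> R -> R) : Prop :=
  (forall t, is_fdist01 (D t)) /\
  forall a : R, 0 <= a <= 1 -> \sum_(t < T) (x t - a) * D t a = 0.

Definition l1dist_distr (p : 'I_T -> R) (D : 'I_T -> R -> R) : R :=
  \sum_(t < T) \sum_(a \in [set: R]) D t a * `|p t - a|.

End Defs.

(* Main.v *)
Require Import Defs.
From HB Require Import structures.
From mathcomp Require Import all_boot all_order all_algebra.
From mathcomp Require Import finmap.
From mathcomp Require Import all_classical all_reals.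
From mathcomp Require Import ring lra zify.
Import Order.TTheory GRing.Theory Num.Theory.
Local Open Scope classical_set_scope.
Local Open Scope ring_scope.

Lemma prefix_count (P : pred nat) (k : nat) :
  (forall i i', (i <= i')%N -> (i' < k)%N -> P i' -> P i) ->
  forall i, (i < k)%N -> P i = (i < count P (iota 0 k))%N.
Proof.
move=> dc i ik.
case Pi: (P i).
  have -> : iota 0 k = iota 0 i.+1 ++ iota i.+1 (k - i.+1).
    by rewrite -iotaD subnKC.
  rewrite count_cat.
  have -> : count P (iota 0 i.+1) = i.+1.
    rewrite (@eq_in_count _ _ predT) ?count_predT ?size_iota // => i'.
    rewrite mem_iota add0n => /andP[_ hi'].
    by apply: (dc i' i) => //.
  by rewrite ltn_addr.
have -> : iota 0 k = iota 0 i ++ iota i (k - i).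
  by rewrite -iotaD subnKC // ltnW.
rewrite count_cat.
have -> : count P (iota i (k - i)) = 0%N.
  apply/eqP; rewrite -leqn0 leqNgt -has_count; apply/hasPn => i'.
  rewrite mem_iota subnKC ?(ltnW ik) // => /andP[h1 h2].
  by apply/negP => Pi'; move: (dc i i' h1 h2 Pi'); rewrite Pi.
rewrite addn0; apply/esym/negbTE; rewrite -leqNgt.
by apply: (leq_trans (count_size _ _)); rewrite size_iota.
Qed.

Section Lf.
Variable R : realType.

Definition Lf (Z : seq R) (h : R -> R) : R :=
  \sum_(zz <- zip Z (behead Z)) (zz.2 - zz.1) * h zz.1.

Lemma Lf_cons2 z0 z1 Z h : Lf (z0 :: z1 :: Z) h = (z1 - z0) * h z0 + Lf (z1 :: Z) h.
Proof. by rewrite /Lf /= big_cons. Qed.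

Lemma Lf1 z h : Lf [:: z] h = 0.
Proof. by rewrite /Lf /= big_nil. Qed.

Lemma Lf_sum (I : Type) (r : seq I) (P : pred I) (F : I -> R -> R) Z :
  Lf Z (fun z => \sum_(i <- r | P i) F i z) = \sum_(i <- r | P i) Lf Z (F i).
Proof.
rewrite /Lf exchange_big; apply: eq_bigr => zz _; by rewrite mulr_sumr.
Qed.

Lemma Lf_B Z h1 h2 : Lf Z (fun z => h1 z - h2 z) = Lf Z h1 - Lf Z h2.
Proof. by rewrite /Lf -sumrB; apply: eq_bigr => zz _; rewrite mulrBr. Qed.

Lemma Lf_D Z h1 h2 : Lf Z (fun z => h1 z + h2 z) = Lf Z h1 + Lf Z h2.
Proof. by rewrite /Lf -big_split; apply: eq_bigr => zz _; rewrite mulrDr. Qed.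

Lemma Lf_Z Z c h : Lf Z (fun z => c * h z) = c * Lf Z h.
Proof.
rewrite /Lf mulr_sumr; apply: eq_bigr => zz _; by rewrite mulrCA.
Qed.

Lemma Lf_ext Z h h' : {in Z, h =1 h'} -> Lf Z h = Lf Z h'.
Proof.
elim: Z => [|z0 Z IH] hh; first by rewrite /Lf !big_nil.
case: Z IH hh => [|z1 Z] IH hh; first by rewrite !Lf1.
rewrite !Lf_cons2 hh ?mem_head // IH // => z zin; apply: hh.
by rewrite inE zin orbT.
Qed.

Lemma Lf_le Z h h' : sorted <=%R Z -> (forall z, h z <= h' z) -> Lf Z h <= Lf Z h'.
Proof.
move=> + hh; elim: Z => [|z0 Z IH] sZ; first by rewrite /Lf !big_nil.
case: Z IH sZ => [|z1 Z] IH sZ; first by rewrite !Lf1.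
move: sZ => /= /andP[z01 sZ].
rewrite !Lf_cons2 lerD ?IH //.
by rewrite ler_wpM2l // subr_ge0.
Qed.

Lemma Lf_one_eq z0 Z : sorted <=%R (z0 :: Z) -> Lf (z0 :: Z) (fun _ => 1) = last z0 Z - z0.
Proof.
elim: Z z0 => [|z1 Z IH] z0 sZ; first by rewrite Lf1 subrr.
move: sZ => /= /andP[z01 sZ].
rewrite Lf_cons2 IH // mulr1 /=; lra.
Qed.

Lemma Lf_one Z : sorted <=%R Z -> (forall z, z \in Z -> 0 <= z <= 1) ->
  Lf Z (fun _ => 1) <= 1.
Proof.
case: Z => [|z0 Z] sZ hZ; first by rewrite /Lf big_nil.
rewrite Lf_one_eq //.
have := hZ z0 (mem_head _ _); have := hZ (last z0 Z) (mem_last _ _).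
move=> /andP[_ h1] /andP[h2 _]; lra.
Qed.

Lemma Lf_ind z0 Z a : sorted <=%R (z0 :: Z) -> a \in z0 :: Z ->
  Lf (z0 :: Z) (fun z => ((a <= z)%R)%:R) = last z0 Z - a.
Proof.
elim: Z z0 a => [|z1 Z IH] z0 a sZ.
  by rewrite inE => /eqP ->; rewrite Lf1 subrr.
move: (sZ) => /= /andP[z01 sZ'].
have hmin : forall z, z \in z1 :: Z -> z1 <= z.
  move=> z; rewrite inE => /orP[/eqP -> //|zZ].
  by have /allP := order_path_min le_trans sZ'; apply.
move=> ain; case aZ: (a \in z1 :: Z).
  rewrite Lf_cons2 IH //=.
  have := hmin a aZ => h.
  case: (lerP a z0) => ha; last by rewrite mulr0 add0r.
  have -> : z1 = z0 by apply/eqP; rewrite eq_le z01 (le_trans h ha).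
  by rewrite subrr mul0r add0r.
move: ain; rewrite inE aZ orbF => /eqP ea; rewrite ea.
rewrite Lf_cons2 lexx mulr1.
rewrite (@Lf_ext _ _ (fun z => ((z1 <= z)%R)%:R)); last first.
  move=> z zin; have := hmin z zin => h.
  by rewrite h (le_trans z01 h).
by rewrite IH ?mem_head //=; lra.
Qed.

Lemma Lf_abs Z a b : sorted <=%R Z -> a \in Z -> b \in Z ->
  Lf Z (fun z => `|((a <= z)%R)%:R - ((b <= z)%R)%:R|) = `|a - b|.
Proof.
wlog ab : a b / a <= b.
  move=> hw sZ aZ bZ; case: (boolP (a <= b)) => h; first exact: (hw a b h sZ aZ bZ).
  rewrite distrC (@Lf_ext _ _ (fun z => `|((b <= z)%R)%:R - ((a <= z)%R)%:R|)).
    by apply: hw => //; rewrite ltW // ltNge.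
  by move=> z _; rewrite distrC.
case: Z => [|z0 Z] // sZ aZ bZ.
rewrite (@Lf_ext _ _ (fun z => ((a <= z)%R)%:R - ((b <= z)%R)%:R)); last first.
  move=> z _; case: (lerP b z) => hb.
    by rewrite (le_trans ab hb) subrr normr0.
  by rewrite subr0 ger0_norm.
rewrite Lf_B !Lf_ind // ler0_norm ?subr_le0 //; lra.
Qed.

End Lf.
Arguments Lf {R}.

Lemma cnt_bound (R : realType) (g : R) (n : nat) : 0 <= g ->
  let h := \sum_(i < n) (((i.+1)%:R <= g)%R)%:R in
  [/\ h <= n%:R, h <= g & (n%:R <= h \/ g - 1 <= h)].
Proof.
move=> g0; elim: n => [|n [IH1 IH2 IH3]] /=.
  by rewrite big_ord0; split => //; left.
rewrite big_ord_recr /=.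
case: (boolP ((n.+1)%:R <= g)) => hg; rewrite ?hg ?(negbTE hg) /=; rewrite -natr1 in hg *.
  split; try lra.
rewrite addr0; split; try lra.
Qed.

Section Main.
Variables (R : realType) (T : nat) (x p : 'I_T -> R) (S : {fset R}) (D : 'I_T -> R -> R).
Hypotheses (hx : forall t, x t = 0 \/ x t = 1)
  (hp : forall t, 0 <= p t <= 1)
  (hS : forall a, a \in S -> 0 <= a <= 1)
  (hD : lowC x D)
  (hDS : forall t a, D t a != 0 -> a \in S).

Definition s := sort <=%R (enum_fset S).
Definition k := size s.
Definition al i := nth 0 s i.

Lemma s_sorted : sorted <=%R s.
Proof. by apply: sort_sorted => a b; apply: le_total. Qed.

Lemma s_uniq : uniq s.
Proof. by rewrite sort_uniq fset_uniq. Qed.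

Lemma mem_s a : (a \in s) = (a \in S).
Proof. by rewrite mem_sort. Qed.

Lemma al_mono i i' : (i <= i')%N -> (i' < k)%N -> al i <= al i'.
Proof.
move=> ii' i'k; apply: (sorted_leq_nth le_trans lexx) => //; first exact: s_sorted.
by rewrite inE; apply: leq_ltn_trans i'k.
Qed.

Lemma al_in i : (i < k)%N -> al i \in S.
Proof. by move=> ik; rewrite -mem_s mem_nth. Qed.

Lemma al01 i : (i < k)%N -> 0 <= al i <= 1.
Proof. by move=> ik; apply: hS; apply: al_in. Qed.

Lemma card_k : #|` S| = k.
Proof. by rewrite /k size_sort. Qed.

Lemma fsum_s (f : R -> R) : (forall a, f a != 0 -> a \in S) ->
  \sum_(a \in [set: R]) f a = \sum_(i < k) f (al i).
Proof.
move=> hf.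
rewrite -(fsbig_widen [set` s] setT f) //; last first.
  move=> a [_ /= ans]; apply/eqP; apply: contraT => fa.
  by case: ans; rewrite mem_s; apply: hf.
rewrite -fsbig_seq; last exact: s_uniq.
by rewrite (big_nth 0) big_mkord.
Qed.

Lemma D_ge0 t a : 0 <= D t a.
Proof. by case: hD => /(_ t) [h _ _ _] _; apply: h. Qed.

Lemma DS1 t : \sum_(i < k) D t (al i) = 1.
Proof.
case: hD => /(_ t) [_ _ _ h] _; rewrite -h fsum_s //.
by move=> a; apply: hDS.
Qed.

Lemma calib i : (i < k)%N -> \sum_(t < T) (x t - al i) * D t (al i) = 0.
Proof. by move=> ik; case: hD => _ h; apply: h; apply: al01. Qed.

Definition b t := x t == 1.

Lemma xb t : x t = (b t)%:R.
Proof. by rewrite /b; case: (hx t) => ->; rewrite ?eqxx // eq_sym oner_eq0. Qed.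

Definition ltT (t' t : 'I_T) := (p t' < p t) || ((p t' == p t) && (t' < t)%N).

Lemma ltT_irr t : ltT t t = false.
Proof. by rewrite /ltT ltxx eqxx ltnn. Qed.

Lemma ltT_trans t1 t2 t3 : ltT t1 t2 -> ltT t2 t3 -> ltT t1 t3.
Proof.
rewrite /ltT => /orP[h1|/andP[/eqP e1 h1]] /orP[h2|/andP[/eqP e2 h2]].
- by rewrite (lt_trans h1 h2).
- by rewrite -e2 h1.
- by rewrite e1 h2.
- by rewrite e1 e2 eqxx (ltn_trans h1 h2) orbT.
Qed.

Lemma ltT_total t t' : t != t' -> ltT t t' || ltT t' t.
Proof.
move=> ne; rewrite /ltT.
case: (ltgtP (p t) (p t')) => //= e.
case: (ltngtP t t') => // /val_inj e'.
by rewrite e' eqxx in ne.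
Qed.

Definition Cls c := [set t : 'I_T | b t == c]%SET.

Definition r t := #|[set t' : 'I_T | (b t' == b t) && ltT t' t]%SET|.

Lemma r_lt t : (r t < #|Cls (b t)|)%N.
Proof.
apply: proper_card; apply/properP; split.
  by apply/fintype.subsetP => t'; rewrite !inE => /andP[].
by exists t; rewrite !inE ?eqxx //= ltT_irr.
Qed.

Lemma r_mono t t' : b t = b t' -> ltT t t' -> (r t < r t')%N.
Proof.
move=> e h; apply: proper_card; apply/properP; split.
  apply/fintype.subsetP => u; rewrite !inE => /andP[/eqP -> hu].
  by rewrite e eqxx (ltT_trans _ _ _ hu h).
by exists t; rewrite !inE ?e ?eqxx ?h //= ltT_irr.
Qed.

Lemma r_sum c (F : nat -> R) :
  \sum_(t | b t == c) F (r t) = \sum_(i < #|Cls c|) F i.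
Proof.
have -> : \sum_(t | b t == c) F (r t) = \sum_(t in Cls c) F (r t).
  by apply: eq_bigl => t; rewrite inE.
rewrite -big_enum -(big_map r xpredT F).
have hperm : perm_eq (map r (enum (Cls c))) (iota 0 #|Cls c|).
  have u1 : uniq (map r (enum (Cls c))).
    rewrite map_inj_in_uniq ?enum_uniq // => t t'.
    rewrite !mem_enum !inE => /eqP ht /eqP ht' e.
    apply/eqP; apply: contraT => ne.
    have ebt : b t = b t' by rewrite ht ht'.
    case/orP: (ltT_total _ _ ne) => h.
      by have := r_mono _ _ ebt h; rewrite e ltnn.
    by have := r_mono _ _ (esym ebt) h; rewrite e ltnn.
  apply: uniq_perm => //; first exact: iota_uniq.
  have hsub : {subset map r (enum (Cls c)) <= iota 0 #|Cls c|}.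
    move=> i /mapP[t]; rewrite mem_enum inE => /eqP ht ->.
    by rewrite mem_iota add0n -ht r_lt.
  have hsz : (size (iota 0 #|Cls c|) <= size (map r (enum (Cls c))))%N.
    by rewrite size_map size_iota -cardE.
  exact: (uniq_min_size u1 hsub hsz).2.
by rewrite (perm_big _ hperm) /= -(big_mkord xpredT) /index_iota subn0.
Qed.

Definition Gi c m := \sum_(t | b t == c) \sum_(i < k | (i < m)%N) D t (al i).

Lemma Gi_mono c m m' : (m <= m')%N -> Gi c m <= Gi c m'.
Proof.
move=> mm; apply: ler_sum => t _.
rewrite [X in X <= _]big_mkcond [X in _ <= X]big_mkcond /=; apply: ler_sum => i _.
case: ifP => h; first by rewrite (leq_trans h mm).
by case: ifP => _; rewrite ?D_ge0.
Qed.

Lemma Gi_ge0 c m : 0 <= Gi c m.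
Proof. by apply: sumr_ge0 => t _; apply: sumr_ge0 => i _; apply: D_ge0. Qed.

Lemma Gi0 c : Gi c 0 = 0.
Proof. by apply: big1 => t _; apply: big_pred0 => i; rewrite ltn0. Qed.

Lemma Gik c : Gi c k = (#|Cls c|)%:R.
Proof.
rewrite /Gi (eq_bigr (fun _ => 1)); last first.
  by move=> t _; rewrite -(DS1 t); apply: eq_bigl => i; rewrite ltn_ord.
by rewrite sumr_const; congr (_ *+ _); apply: eq_card => t; rewrite inE.
Qed.

Lemma Gi_le c m : Gi c m <= (#|Cls c|)%:R.
Proof.
case: (leqP m k) => h; first by rewrite -Gik Gi_mono.
rewrite -Gik (_ : Gi c m = Gi c k) //; apply: eq_bigr => t _; apply: eq_bigl => i.
by rewrite ltn_ord (ltn_trans (ltn_ord i) h).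
Qed.

Definition jj t := count (fun i => Gi (b t) i.+1 < (r t).+1%:R) (iota 0 k).

Lemma jj_lt m t : (m <= k)%N -> (jj t < m)%N = ((r t).+1%:R <= Gi (b t) m).
Proof.
case: m => [|m] mk.
  by rewrite ltn0 Gi0 leNgt ltr0Sn.
rewrite ltnS leqNgt -(@prefix_count (fun i => Gi (b t) i.+1 < (r t).+1%:R) k) //.
  by rewrite -leNgt.
move=> i i' ii' i'k /= h; apply: le_lt_trans h; apply: Gi_mono; by rewrite ltnS.
Qed.

Lemma jj_k t : (jj t < k)%N.
Proof. by rewrite jj_lt // Gik ler_nat r_lt. Qed.

Lemma jj_mono t t' : b t = b t' -> (r t <= r t')%N -> (jj t <= jj t')%N.
Proof.
move=> e h; apply: sub_count => i /= hi; rewrite -e.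
by apply: (lt_le_trans hi); rewrite ler_nat.
Qed.

Definition cnt z := count (fun i => al i <= z) (iota 0 k).

Lemma al_le i z : (i < k)%N -> (al i <= z) = (i < cnt z)%N.
Proof.
move=> ik; apply: (@prefix_count (fun i => al i <= z)) => // j j' jj' j'k /= h.
by apply: le_trans h; apply: al_mono.
Qed.

Lemma cnt_le z : (cnt z <= k)%N.
Proof. by rewrite /cnt (leq_trans (count_size _ _)) // size_iota. Qed.

Definition C c (g : R) : R := \sum_(t | b t == c) (((r t).+1%:R <= g)%R)%:R.

Lemma C_bound c g : 0 <= g -> g <= (#|Cls c|)%:R -> g - 1 <= C c g <= g.
Proof.
move=> g0 gn; rewrite /C (r_sum c (fun i => (((i.+1)%:R <= g)%R)%:R)).
have [h1 h2 h3] := @cnt_bound R g #|Cls c| g0.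
apply/andP; split => //; case: h3 => h3 //; lra.
Qed.

Definition Gz c (z : R) : R := \sum_(t | b t == c) \sum_(i < k) D t (al i) * ((al i <= z)%R)%:R.
Definition GMz c (z : R) : R := \sum_(t | b t == c) ((al (jj t) <= z)%R)%:R.
Definition Fz c (z : R) : R := \sum_(t | b t == c) ((p t <= z)%R)%:R.

Lemma Gz_eq c z : Gz c z = Gi c (cnt z).
Proof.
apply: eq_bigr => t _; rewrite [RHS]big_mkcond /=; apply: eq_bigr => i _.
by rewrite al_le //; case: (i < cnt z)%N; rewrite ?mulr1 ?mulr0.
Qed.

Lemma GMz_eq c z : GMz c z = C c (Gi c (cnt z)).
Proof.
apply: eq_bigr => t /eqP <-.
by rewrite al_le ?jj_k // jj_lt // cnt_le.
Qed.

Lemma GM_G c z : `|Gz c z - GMz c z| <= 1.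
Proof.
rewrite Gz_eq GMz_eq.
have := @C_bound c _ (Gi_ge0 c (cnt z)) (Gi_le c (cnt z)) => /andP[h1 h2].
rewrite ler_norml; apply/andP; split; lra.
Qed.

Definition Z := sort <=%R ([seq p t | t <- enum 'I_T] ++ s).

Lemma Z_sorted : sorted <=%R Z.
Proof. by apply: sort_sorted => a b'; apply: le_total. Qed.

Lemma Z01 z : z \in Z -> 0 <= z <= 1.
Proof.
rewrite mem_sort mem_cat => /orP[/mapP[t _ ->]|]; first exact: hp.
by rewrite mem_s; apply: hS.
Qed.

Lemma p_in_Z t : p t \in Z.
Proof. by rewrite mem_sort mem_cat map_f ?mem_enum. Qed.

Lemma al_in_Z i : (i < k)%N -> al i \in Z.
Proof. by move=> ik; rewrite mem_sort mem_cat mem_nth ?orbT. Qed.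

Lemma same_sign c z :
  \sum_(t | b t == c) `|((p t <= z)%R)%:R - ((al (jj t) <= z)%R)%:R| = `|Fz c z - GMz c z|.
Proof.
rewrite /Fz /GMz -sumrB.
case: (boolP [exists t, (b t == c) && (z < p t) && (al (jj t) <= z)]).
  case/existsP => t0 /andP[/andP[/eqP h0 zp0] a0].
  have hu : forall t, b t == c ->
      `|((p t <= z)%R)%:R - ((al (jj t) <= z)%R)%:R| = - (((p t <= z)%R)%:R - ((al (jj t) <= z)%R)%:R) :> R.
    move=> t /eqP ht.
    case: (boolP (p t <= z)) => hpt; case: (boolP (al (jj t) <= z)) => hat /=;
      rewrite ?subrr ?normr0 ?oppr0 ?subr0 ?sub0r ?opprK ?normrN ?normr1 //.
    exfalso; move: hat; rewrite -ltNge => hat.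
    have hl : ltT t t0 by rewrite /ltT (le_lt_trans hpt zp0).
    have hr := r_mono _ _ (etrans ht (esym h0)) hl.
    have hj := jj_mono _ _ (etrans ht (esym h0)) (ltnW hr).
    have := al_mono _ _ hj (jj_k t0).
    move=> h; have := lt_le_trans hat (le_trans h a0); by rewrite ltxx.
  rewrite (eq_bigr _ hu) sumrN ler0_norm //.
  rewrite -oppr_ge0 -sumrN; apply: sumr_ge0 => t ht; rewrite -hu //.
rewrite negb_exists => /forallP hn.
have hu : forall t, b t == c ->
    `|((p t <= z)%R)%:R - ((al (jj t) <= z)%R)%:R| = (((p t <= z)%R)%:R - ((al (jj t) <= z)%R)%:R) :> R.
  move=> t ht; have := hn t; rewrite ht /=.
  case: (boolP (p t <= z)) => hpt; case: (boolP (al (jj t) <= z)) => hat /=;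
    rewrite ?subrr ?normr0 ?subr0 ?normr1 //.
  by rewrite -ltNge in hpt; rewrite hpt.
rewrite (eq_bigr _ hu) ger0_norm //.
by apply: sumr_ge0 => t ht; rewrite -hu.
Qed.

Lemma F_G c z :
  `|Fz c z - Gz c z| <=
  \sum_(t | b t == c) \sum_(i < k) D t (al i) * `|((p t <= z)%R)%:R - ((al i <= z)%R)%:R|.
Proof.
rewrite /Fz /Gz -sumrB.
have H : forall t, ((p t <= z)%R)%:R - \sum_(i < k) D t (al i) * ((al i <= z)%R)%:R
   = \sum_(i < k) D t (al i) * (((p t <= z)%R)%:R - ((al i <= z)%R)%:R) :> R.
  move=> t; rewrite -[X in X - _]mul1r -(DS1 t) mulr_suml -sumrB.
  by apply: eq_bigr => i _; rewrite mulrBr.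
rewrite (eq_bigr _ (fun t _ => H t)).
apply: le_trans (ler_norm_sum _ _ _) _; apply: ler_sum => t _.
apply: le_trans (ler_norm_sum _ _ _) _; apply: ler_sum => i _.
by rewrite normrM ger0_norm ?D_ge0.
Qed.

Lemma costM_le c :
  \sum_(t | b t == c) `|p t - al (jj t)| <=
  \sum_(t | b t == c) \sum_(i < k) D t (al i) * `|p t - al i| + 1.
Proof.
have E1 : \sum_(t | b t == c) `|p t - al (jj t)| =
    Lf Z (fun z => \sum_(t | b t == c) `|((p t <= z)%R)%:R - ((al (jj t) <= z)%R)%:R|).
  rewrite Lf_sum; apply: eq_bigr => t _.
  by rewrite Lf_abs ?Z_sorted ?p_in_Z ?al_in_Z ?jj_k.
have E2 : \sum_(t | b t == c) \sum_(i < k) D t (al i) * `|p t - al i| =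
    Lf Z (fun z => \sum_(t | b t == c) \sum_(i < k) D t (al i) *
       `|((p t <= z)%R)%:R - ((al i <= z)%R)%:R|).
  rewrite Lf_sum; apply: eq_bigr => t _.
  rewrite Lf_sum; apply: eq_bigr => i _.
  by rewrite Lf_Z Lf_abs ?Z_sorted ?p_in_Z ?al_in_Z.
rewrite E1 E2.
apply: (@le_trans _ _ (Lf Z (fun z => `|Fz c z - Gz c z| + 1))).
  apply: Lf_le; first exact: Z_sorted.
  move=> z; rewrite same_sign.
  have := GM_G c z; have := ler_normD (Fz c z - Gz c z) (Gz c z - GMz c z).
  rewrite addrA subrK => h1 h2; lra.
rewrite Lf_D; apply: lerD.
  by apply: Lf_le; [exact: Z_sorted | move=> z; apply: F_G].
by apply: Lf_one; [exact: Z_sorted | exact: Z01].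
Qed.

Definition nJ (J : nat) : R := \sum_(t < T) ((jj t == J))%:R.
Definition mJ (J : nat) : R := \sum_(t < T) ((jj t == J))%:R * x t.
Definition qJ J := mJ J / nJ J.
Definition q t := qJ (jj t).

Lemma x01 t : 0 <= x t <= 1.
Proof. by case: (hx t) => ->; rewrite ?lexx ?ler01. Qed.

Lemma mJ_ge0 J : 0 <= mJ J.
Proof.
apply: sumr_ge0 => t _; apply: mulr_ge0; first by rewrite ler0n.
by case/andP: (x01 t).
Qed.

Lemma mJ_le J : mJ J <= nJ J.
Proof.
apply: ler_sum => t _; rewrite -[X in _ <= X]mulr1; apply: ler_wpM2l; first by rewrite ler0n.
by case/andP: (x01 t).
Qed.

Lemma mJ_eq J : mJ J - nJ J * qJ J = 0.
Proof.
rewrite /qJ; case: (eqVneq (nJ J) 0) => h.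
  have : mJ J = 0 by apply/eqP; rewrite eq_le mJ_ge0 andbT -h mJ_le.
  by move=> ->; rewrite h !mul0r subrr.
by rewrite mulrC divfK // subrr.
Qed.

Lemma q01 t : 0 <= q t <= 1.
Proof.
rewrite /q /qJ; set J := jj t.
case: (eqVneq (nJ J) 0) => h; first by rewrite h invr0 mulr0 lexx ler01.
have hp0 : 0 < nJ J by rewrite lt_def h /=; apply: le_trans (mJ_ge0 J) (mJ_le J).
apply/andP; split; first by rewrite divr_ge0 ?mJ_ge0 // ltW.
by rewrite ler_pdivrMr // mul1r mJ_le.
Qed.

Lemma regroup (F : 'I_T -> R) :
  \sum_(t < T) F t = \sum_(J < k) \sum_(t < T) ((jj t == J))%:R * F t.
Proof.
rewrite exchange_big; apply: eq_bigr => t _.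
rewrite (bigD1 (Ordinal (jj_k t))) //= eqxx mul1r big1 ?addr0 // => J hJ.
suff -> : (jj t == J) = false by rewrite mul0r.
apply/negbTE; move: hJ; apply: contra => /eqP e; apply/eqP/val_inj => /=.
by rewrite e.
Qed.

Lemma q_calib : calibrated x q.
Proof.
split; first exact: q01.
move=> v _; rewrite regroup; apply: big1 => J _.
rewrite (eq_bigr (fun t => ((jj t == J))%:R * (x t - qJ J) * ((qJ J == v))%:R)); last first.
  move=> t _; case: (eqVneq (jj t) J) => e; last by rewrite !mul0r.
  by rewrite /q e mulrA.
rewrite -mulr_suml; apply/eqP; rewrite mulf_eq0; apply/orP; left; apply/eqP.
rewrite (eq_bigr (fun t => ((jj t == J))%:R * x t - qJ J * ((jj t == J))%:R)); last first.
  by move=> t _; rewrite mulrBr [_ * qJ J]mulrC.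
by rewrite sumrB -mulr_sumr mulrC; exact: (mJ_eq J).
Qed.

Lemma split_b (F : 'I_T -> R) :
  \sum_(t < T) F t = \sum_(t | b t == true) F t + \sum_(t | b t == false) F t.
Proof.
rewrite (bigID (fun t => b t == true)) /=; congr (_ + _).
by apply: eq_bigl => t; case: (b t).
Qed.

Definition N c J : R := \sum_(t | b t == c) ((jj t == J))%:R.
Definition A c J : R := \sum_(t | b t == c) D t (al J).

Lemma N_A c J : (J < k)%N -> -1 <= N c J - A c J <= 1.
Proof.
move=> Jk.
have EN : N c J = C c (Gi c J.+1) - C c (Gi c J).
  rewrite /N /C -sumrB; apply: eq_bigr => t /eqP <-.
  rewrite -!jj_lt // ?(ltnW Jk) // ltnS leq_eqVlt.
  case: (eqVneq (jj t) J) => [->|ne]; first by rewrite ltnn subr0.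
  by rewrite /= subrr.
have EA : A c J = Gi c J.+1 - Gi c J.
  rewrite /A /Gi -sumrB; apply: eq_bigr => t _.
  rewrite [X in _ = X - _]big_mkcond [X in _ = _ - X]big_mkcond -sumrB /=.
  rewrite (bigD1 (Ordinal Jk)) //= ltnSn ltnn subr0 big1 ?addr0 // => i hi.
  have hi' : (val i != J) by move: hi; apply: contra => /eqP e; apply/eqP/val_inj.
  rewrite ltnS leq_eqVlt (negbTE hi') /=.
  by case: (i < J)%N; rewrite subrr.
have := @C_bound c (Gi c J.+1) (Gi_ge0 _ _) (Gi_le _ _).
have := @C_bound c (Gi c J) (Gi_ge0 _ _) (Gi_le _ _).
rewrite EN EA => /andP[h1 h2] /andP[h3 h4].
apply/andP; split; lra.
Qed.

Lemma group_bound J : (J < k)%N -> nJ J * `|al J - qJ J| <= 1.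
Proof.
move=> Jk.
have En : nJ J = N true J + N false J by rewrite /nJ split_b.
have Em : mJ J = N true J.
  rewrite /mJ split_b.
  rewrite (eq_bigr (fun t => ((jj t == J))%:R)); last first.
    by move=> t /eqP ht; rewrite xb ht mulr1.
  rewrite [X in _ + X](eq_bigr (fun t => 0)); last first.
    by move=> t /eqP ht; rewrite xb ht mulr0.
  by rewrite [X in _ + X]big1 ?addr0.
have Ec : (1 - al J) * A true J - al J * A false J = 0.
  rewrite -(calib _ Jk) (split_b (fun t => (x t - al J) * D t (al J))).
  rewrite /A mulr_sumr mulr_sumr -sumrN; congr (_ + _); apply: eq_bigr => t /eqP ht;
    rewrite xb ht /=; ring.
have := N_A true J Jk; have := N_A false J Jk; have := al01 _ Jk.
move=> /andP[a0 a1] /andP[h1 h2] /andP[h3 h4].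
have hE : nJ J * `|al J - qJ J| = `|nJ J * al J - mJ J|.
  case: (eqVneq (nJ J) 0) => h.
    have : mJ J = 0 by apply/eqP; rewrite eq_le mJ_ge0 andbT -h mJ_le.
    by move=> ->; rewrite h !mul0r subrr normr0.
  have hp0 : 0 < nJ J by rewrite lt_def h /=; apply: le_trans (mJ_ge0 J) (mJ_le J).
  rewrite -[X in X * _]ger0_norm ?ltW // -normrM mulrBr /qJ. by rewrite (mulrC (nJ J) (mJ J / nJ J)) divfK.
rewrite hE En Em.
have -> : (N true J + N false J) * al J - N true J =
   al J * (N false J - A false J) - (1 - al J) * (N true J - A true J)
   - ((1 - al J) * A true J - al J * A false J) by ring.
rewrite Ec subr0.
apply: le_trans (ler_normB _ _) _.
rewrite !normrM (ger0_norm a0) (@ger0_norm _ (1 - al J)) ?subr_ge0 //.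
have e1 : `|N false J - A false J| <= 1 by rewrite ler_norml h1 h2.
have e2 : `|N true J - A true J| <= 1 by rewrite ler_norml h3 h4.
have : al J * `|N false J - A false J| <= al J by rewrite -[X in _ <= X]mulr1 ler_wpM2l.
have : (1 - al J) * `|N true J - A true J| <= 1 - al J.
  by rewrite -[X in _ <= X]mulr1 ler_wpM2l // subr_ge0.
lra.
Qed.

Lemma l1D_eq : l1dist_distr p D = \sum_(t < T) \sum_(i < k) D t (al i) * `|p t - al i|.
Proof.
apply: eq_bigr => t _; apply: fsum_s => a h; apply: (hDS t).
by apply: contraNneq h => ->; rewrite mul0r.
Qed.

Lemma k_pos (t0 : 'I_T) : (0 < k)%N.
Proof.
have := DS1 t0; case: (posnP k) => // k0.
suff -> : \sum_(i < k) D t0 (al i) = 0 by move=> /eqP; rewrite eq_sym oner_eq0.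
by apply: big1 => i; have := ltn_ord i; rewrite {2}k0.
Qed.

Lemma main_bound (t0 : 'I_T) : l1dist p q <= l1dist_distr p D + 4 * k%:R.
Proof.
rewrite /l1dist.
have step1 : \sum_(t < T) `|p t - q t| <=
    \sum_(t < T) `|p t - al (jj t)| + \sum_(t < T) `|al (jj t) - q t|.
  by rewrite -big_split; apply: ler_sum => t _; apply: ler_distD.
have step2 : \sum_(t < T) `|p t - al (jj t)| <= l1dist_distr p D + 2.
  rewrite l1D_eq (split_b (fun t => `|p t - al (jj t)|)).
  rewrite (split_b (fun t => \sum_(i < k) D t (al i) * `|p t - al i|)).
  have := costM_le true; have := costM_le false; lra.
have step3 : \sum_(t < T) `|al (jj t) - q t| <= k%:R.
  rewrite (regroup (fun t => `|al (jj t) - q t|)).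
  rewrite -[X in _ <= X%:R]card_ord -sumr_const.
  apply: ler_sum => J _.
  rewrite (eq_bigr (fun t => ((jj t == J))%:R * `|al J - qJ J|)); last first.
    move=> t _; case: (eqVneq (jj t) J) => e; last by rewrite !mul0r.
    by rewrite /q e.
  by rewrite -mulr_suml; apply: group_bound.
have hk : 1 <= k%:R :> R by rewrite ler1n k_pos.
lra.
Qed.
End Main.

Theorem lemma2 (R : realType) (T : nat) (hT : (0 < T)%N)
  (x p : 'I_T -> R) (S : {fset R}) (D : 'I_T -> R -> R)
  (hx : forall t, x t = 0 \/ x t = 1)
  (hp : forall t, 0 <= p t <= 1)
  (hS : forall a, a \in S -> 0 <= a <= 1)
  (hD : lowC x D)
  (hDS : forall t a, D t a != 0 -> a \in S) :
  CalDist x p <= l1dist_distr p D + 4 * (#|` S|)%:R.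
Proof.
rewrite card_k.
apply: le_trans _ (@main_bound R T x p S D hx hp hS hD hDS (Ordinal hT)).
rewrite /CalDist.
have := @ge_inf R [set l1dist p q | q in [set q | calibrated x q]].
apply.
  exists 0 => y [q' _ <-]; apply: sumr_ge0 => t _; apply: normr_ge0.
by exists (q R T x p S D) => //; apply: (@q_calib R T x p S D hx hD hDS).
Qed.
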